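(* Let $C=(Q,\Sigma,\Psi)$ be a HMM over a finite profile language $\Gamma=\{\beta_1,\dots,\beta_K\}$ with labelling reduction $L=(Q,\hat\Sigma,\hat M)$. Then for any initial distributions $\pi_1,\pi_2$, $\pi_1\equiv_L\pi_2$ implies $\pi_1\equiv_C\pi_2$.
   Context: Let $(\Sigma,\mathscr{G},\lambda)$ be a measure space where $\Sigma$ is a topological space and every open subset belongs to $\mathscr{G}$ and has positive measure. A HMM is $(Q,\Sigma,\Psi)$ with $Q$ finite and $\Psi:\Sigma\to[0,\infty)^{|Q|\times|Q|}$ piecewise continuous (continuous on an open set $C'$ such that every point outside $C'$ is a limit of points $x_n\in C'$ with $\Psi(x_n)$ converging to its value) with $\int_\Sigma\Psi\,d\lambda$ stochastic. For an initial distribution $\pi$, $\mathbb{P}_\pi$ is the unique probability measure on $\Sigma^\omega$ with $\mathbb{P}_\pi(A\Sigma^\omega)=\pi\left(\int_A\Psi\,d\lambda^n\right)\mathbbm{1}^T$ for all cylinder sets $A=A_1\times\dots\times A_n\subseteq\Sigma^n$, where $\Psi(x_1\cdots x_n)=\Psi(x_1)\cdots\Psi(x_n)$ and $\lambda^n$ is the product measure; $\pi_1\equiv_C\pi_2$ means $\mathbb{P}_{\pi_1}=\mathbb{P}_{\pi_2}$. For a finite observation set with counting measure, $\Psi$ is just a family of matrices $\Psi(a)$ with $\sum_a\Psi(a)$ stochastic. Profiles $\gamma$ encode functions $[\![\gamma]\!]:\Sigma\to[0,\infty)$. $C$ is over $\Gamma$ if $\Psi$ is given as a matrix whose entries are $0$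 or pairs $(p_{i,j},\gamma_{i,j})\in\mathbb{Q}_+\times\Gamma$ with $\Psi_{i,j}=p_{i,j}[\![\gamma_{i,j}]\!]$ and $\int_\Sigma[\![\gamma_{i,j}]\!]d\lambda=1$. The labelling reduction is the finite-observation HMM $(Q,\hat\Sigma,\hat M)$ with $\hat\Sigma=\{a_1,\dots,a_K\}$ fresh letters and $\hat M_{i,j}(a_k)=p_{i,j}$ if $\gamma_{i,j}=\beta_k$ and $0$ otherwise. *)

(* Defs.v *)
From HB Require Import structures.
From mathcomp Require Import all_boot all_order all_algebra.
From mathcomp Require Import all_classical all_reals all_analysis.
Set Implicit Arguments. Unset Strict Implicit. Unset Printing Implicit Defensive.
Import Order.TTheory GRing.Theory Num.Theory.
Import numFieldNormedType.Exports.
Local Open Scope classical_set_scope.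
Local Open Scope ring_scope.

Definition is_topology (T : Type) (op : set (set T)) : Prop :=
  [/\ op setT, op set0,
      (forall U V, op U -> op V -> op (U `&` V)) &
      (forall F : set (set T), F `<=` op -> op (\bigcup_(U in F) U))].

Definition standing (R : realType) (d : measure_display) (T : measurableType d)
  (op : set (set T)) (lam : {measure set T -> \bar R}) : Prop :=
  forall U, op U -> measurable U /\ (U !=set0 -> (0 < lam U)%E).

Definition seq_conv (T : Type) (op : set (set T)) (u : nat -> T) (x : T) : Prop :=
  forall U, op U -> U x -> exists N, forall m, (N <= m)%N -> U (u m).

Definition cont_within (R : realType) (T : Type) (op : set (set T))
  (C : set T) (f : T -> R) (x : T) : Prop :=
  forall e : R, 0 < e -> exists U, [/\ op U, U x &
     forall y, U y -> C y -> `|f y - f x| < e].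

Definition piecewise_continuous (R : realType) (T : Type) (op : set (set T))
  (n : nat) (Psi : T -> 'M[R]_n) : Prop :=
  exists C : set T, [/\ op C,
    (forall x, C x -> forall i j, cont_within op C (fun y => Psi y i j) x) &
    (forall x, ~ C x -> exists u : nat -> T,
        [/\ (forall m, C (u m)), seq_conv op u x &
            forall i j, (fun m => Psi (u m) i j) @ \oo --> Psi x i j])].

(* ---------- HMM over a finite profile language Gamma = {beta_k | k < K} ----------
   Q = 'I_n ; sem k = [[beta_k]] ; pat i j = None  (entry 0)
                                  or Some (p_ij, k) (entry (p_ij, beta_k)). *)
Definition Psi_of (R : realType) (T : Type) (n K : nat) (sem : 'I_K -> T -> R)
  (pat : 'I_n -> 'I_n -> option (rat * 'I_K)) (x : T) : 'M[R]_n :=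
  \matrix_(i, j) match pat i j with
                 | Some (p, k) => ratr p * sem k x
                 | None => 0
                 end.

Definition intPsi (R : realType) (d : measure_display) (T : measurableType d)
  (lam : {measure set T -> \bar R}) (n : nat) (Psi : T -> 'M[R]_n) (A : set T)
  : 'M[R]_n := \matrix_(i, j) Rintegral lam A (fun x => Psi x i j).

Definition stochastic (R : realType) (n : nat) (M : 'M[R]_n) : Prop :=
  (forall i j, 0 <= M i j) /\ (forall i, \sum_j M i j = 1).

Definition is_distr (R : realType) (n : nat) (pi : 'rV[R]_n) : Prop :=
  (forall i, 0 <= pi 0 i) /\ \sum_i pi 0 i = 1.

Definition ones (R : realType) (n : nat) : 'cV[R]_n := const_mx 1.

Definition HMM_over (R : realType) (d : measure_display) (T : measurableType d)
  (op : set (set T)) (lam : {measure set T -> \bar R}) (n K : nat)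
  (sem : 'I_K -> T -> R) (pat : 'I_n -> 'I_n -> option (rat * 'I_K)) : Prop :=
  [/\ (forall k x, 0 <= sem k x),
      (forall i j p k, pat i j = Some (p, k) ->
          [/\ 0 < p, measurable_fun setT (sem k) &
              (\int[lam]_x (sem k x)%:E = 1)%E]),
      piecewise_continuous op (Psi_of sem pat) &
      stochastic (intPsi lam (Psi_of sem pat) setT)].

(* P_pi(A_1 x ... x A_m Sigma^omega) = pi (int_{A} Psi d lam^m) 1^T, where for
   the rectangle A and Psi(x_1..x_m) = Psi(x_1)...Psi(x_m) the integral
   int_A Psi d lam^m equals int_{A_1} Psi d lam ... int_{A_m} Psi d lam. *)
Definition cyl_prob (R : realType) (d : measure_display) (T : measurableType d)
  (lam : {measure set T -> \bar R}) (n : nat) (Psi : T -> 'M[R]_n)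
  (pi : 'rV[R]_n) (As : seq (set T)) : 'M[R]_1 :=
  pi *m foldr (fun A M => intPsi lam Psi A *m M) 1%:M As *m ones R n.

(* pi1 ==_C pi2 : P_pi1 and P_pi2 agree on all (measurable) cylinder sets,
   which (by uniqueness of P_pi) is P_pi1 = P_pi2 *)
Definition equivC (R : realType) (d : measure_display) (T : measurableType d)
  (lam : {measure set T -> \bar R}) (n : nat) (Psi : T -> 'M[R]_n)
  (pi1 pi2 : 'rV[R]_n) : Prop :=
  forall As : seq (set T), (forall A, A \in As -> measurable A) ->
    cyl_prob lam Psi pi1 As = cyl_prob lam Psi pi2 As.

Definition Mhat (R : realType) (n K : nat)
  (pat : 'I_n -> 'I_n -> option (rat * 'I_K)) (a : 'I_K) : 'M[R]_n :=
  \matrix_(i, j) match pat i j with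
                 | Some (p, k) => if k == a then ratr p else 0
                 | None => 0
                 end.

(* finite observation HMM with counting measure: int_A M = sum_{a in A} M(a) *)
Definition fin_cyl_prob (R : realType) (n K : nat) (M : 'I_K -> 'M[R]_n)
  (pi : 'rV[R]_n) (As : seq {set 'I_K}) : 'M[R]_1 :=
  pi *m foldr (fun (A : {set 'I_K}) (N : 'M[R]_n) => (\sum_(a | a \in A) M a) *m N) 1%:M As *m ones R n.

Definition equivFin (R : realType) (n K : nat) (M : 'I_K -> 'M[R]_n)
  (pi1 pi2 : 'rV[R]_n) : Prop :=
  forall As : seq {set 'I_K}, fin_cyl_prob M pi1 As = fin_cyl_prob M pi2 As.

(* Main.v *)
Require Import Defs.
From HB Require Import structures.
From mathcomp Require Import all_boot all_order all_algebra.
From mathcomp Require Import all_classical all_reals all_analysis.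
From mathcomp Require Import measurable_realfun.
Import Order.TTheory GRing.Theory Num.Theory.
Local Open Scope classical_set_scope.
Local Open Scope ring_scope.

Lemma intPsi_dec (R : realType) (d : measure_display) (T : measurableType d)
  (lam : {measure set T -> \bar R}) (n K : nat)
  (sem : 'I_K -> T -> R) (pat : 'I_n -> 'I_n -> option (rat * 'I_K)) (A : set T) :
  measurable A ->
  (forall k x, 0 <= sem k x) ->
  (forall i j p k, pat i j = Some (p, k) -> 0 < p /\ measurable_fun setT (sem k)) ->
  intPsi lam (Psi_of sem pat) A = \sum_(a < K) Rintegral lam A (sem a) *: Mhat R pat a.
Proof.
move=> mA s0 H; apply/matrixP => i j.
rewrite !mxE summxE.
case E: (pat i j) => [[p k]|].
- have [p0 ms] := H _ _ _ _ E.
  rewrite (bigD1 k) //= big1 ?addr0; last first.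
    by move=> a ak; rewrite !mxE E eq_sym (negbTE ak) mulr0.
  rewrite !mxE E eqxx.
  have -> : (fun x => Psi_of sem pat x i j) = (fun x => ratr p * sem k x).
    by apply: funext => x; rewrite mxE E.
  rewrite /Rintegral.
  under eq_integral do rewrite EFinM.
  rewrite ge0_integralZl_EFin //; last first.
  + by rewrite ler0q ltW.
  + apply/measurable_EFinP; exact: measurable_funS ms.
  + move=> x _; rewrite lee_fin; exact: s0.
  case: (\int[lam]_(x in A) (sem k x)%:E)%E => [r| |] /=.
  + by rewrite mulrC.
  + by rewrite mulry gtr0_sg ?ltr0q // mul1e mul0r.
  + by rewrite mulrNy gtr0_sg ?ltr0q // mul1e mul0r.
- rewrite big1; last by move=> a _; rewrite !mxE E mulr0.
  have -> : (fun x => Psi_of sem pat x i j) = (fun x => 0).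
    by apply: funext => x; rewrite mxE E.
  by rewrite /Rintegral integral0.
Qed.

Section Main.
Variables (R : realType) (n K : nat) (pat : 'I_n -> 'I_n -> option (rat * 'I_K)).

Definition Pz (v : 'rV[R]_n) := forall s : seq 'I_K,
  v *m foldr (fun a N => Mhat R pat a *m N) 1%:M s *m ones R n = 0.

Lemma Pz_fin (pi1 pi2 : 'rV[R]_n) : equivFin (Mhat R pat) pi1 pi2 -> Pz (pi1 - pi2).
Proof.
move=> H s; move: (H (map (fun a => [set a]%SET) s)); rewrite /fin_cyl_prob => E.
have -> : foldr (fun a N => Mhat R pat a *m N) 1%:M s =
  foldr (fun (A : {set 'I_K}) (N : 'M[R]_n) => (\sum_(a | a \in A) Mhat R pat a) *m N) 1%:M
     (map (fun a => [set a]%SET) s).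
  by elim: s {E} => //= a s ->; rewrite big_set1.
by rewrite !mulmxBl E subrr.
Qed.

Lemma Pz_step (v : 'rV[R]_n) (c : 'I_K -> R) : Pz v ->
  Pz (v *m \sum_(a < K) c a *: Mhat R pat a).
Proof.
move=> Hv s.
rewrite mulmx_sumr !mulmx_suml big1 // => a _.
rewrite -scalemxAr !scalemxAl.
have := Hv (a :: s); rewrite /= !mulmxA => E.
by rewrite -!scalemxAl E scaler0.
Qed.


Lemma key (d : measure_display) (T : measurableType d)
  (lam : {measure set T -> \bar R}) (sem : 'I_K -> T -> R) :
  (forall k x, 0 <= sem k x) ->
  (forall i j p k, pat i j = Some (p, k) -> 0 < p /\ measurable_fun setT (sem k)) ->
  forall As : seq (set T), (forall A, A \in As -> measurable A) ->
  forall v, Pz v ->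
  v *m foldr (fun A M => intPsi lam (Psi_of sem pat) A *m M) 1%:M As *m ones R n = 0.
Proof.
move=> s0 H; elim=> [|A As IH] mAs v Pv /=.
  exact: (Pv [::]).
rewrite mulmxA (@intPsi_dec _ _ _ lam _ _ sem pat A) //; last by apply: mAs; rewrite mem_head.
apply: IH; last exact: Pz_step.
by move=> B BAs; apply: mAs; rewrite in_cons BAs orbT.
Qed.

End Main.

Theorem proposition9 (R : realType) (d : measure_display) (T : measurableType d)
  (op : set (set T)) (lam : {measure set T -> \bar R}) (n K : nat)
  (sem : 'I_K -> T -> R) (pat : 'I_n -> 'I_n -> option (rat * 'I_K))
  (pi1 pi2 : 'rV[R]_n) :
  is_topology op -> standing op lam -> HMM_over op lam sem pat ->
  is_distr pi1 -> is_distr pi2 ->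
  equivFin (Mhat R pat) pi1 pi2 ->
  equivC lam (Psi_of sem pat) pi1 pi2.
Proof.
move=> _ _ [s0 Hp _ _] _ _ Hf As mAs.
have H : forall i j p k, pat i j = Some (p, k) -> 0 < p /\ measurable_fun setT (sem k).
  by move=> i j p k E; have [? ? _] := Hp _ _ _ _ E.
apply/eqP; rewrite -subr_eq0; apply/eqP.
rewrite /cyl_prob -!mulmxBl.
exact: (@key R n K pat d T lam sem s0 H As mAs _ (@Pz_fin R n K pat pi1 pi2 Hf)).
Qed.
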